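(* Let $A$ be a general metric space, $\mathcal F$ a weakly flat filter on $A$ and $M$ a left module on $A$ such that $M^-(\mathcal F)(x)<M(x)$ for some $x\in A$. Then there is a forward Cauchy sequence $(y_n)$ in $A$ such that $(y_n)\to\mathcal F$ and $M^-((y_n))(x)<M(x)$ for some $x\in A$ (where $M^-((y_n))$ is $M^-$ of the filter of the sequence).
   Context: A general metric space $A$ is a set with $A(-,-):A\times A\to[0,\infty]$, $A(x,x)=0$, $A(x,z)\le A(x,y)+A(y,z)$. A left module is $M:A\to[0,\infty]$ with $M(x)\le M(y)+A(x,y)$. A filter on $A$ is a nonempty set of nonempty subsets closed under finite intersections and supersets; $M^-(\mathcal F)(x)=\sup_{f\in\mathcal F}\inf_{y\in f}A(x,y)$. $\mathcal F$ is weakly flat iff for every $\epsilon>0$ there is $f\in\mathcal F$ such that for all $x\in f$ and all $g\in\mathcal F$ there is $y\in g$ with $A(x,y)\le\epsilon$. For weakly flat filters, $\mathcal F_1\to\mathcal F_2$ iff for every $\epsilon>0$ there is $f\in\mathcal F_1$ such that for every $x\in f$ and every $g\in\mathcal F_2$ there is $y\in g$ with $A(x,y)\le\epsilon$. The filter of a sequence $(y_n)$ is generated by the tails $\{y_p:p\ge n\}$; $(y_n)$ is forward Cauchy iff for every $\epsilon>0$ there is $N$ with $A(y_n,y_m)\le\epsilon$ whenever $m\ge n\ge N$. *)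

(* Defs.v *)
From HB Require Import structures.
From mathcomp Require Import all_boot all_order all_algebra.
From mathcomp Require Import boolp classical_sets reals constructive_ereal ereal.
Set Implicit Arguments. Unset Strict Implicit. Unset Printing Implicit Defensive.
Import Order.TTheory GRing.Theory Num.Theory.
Local Open Scope classical_set_scope.
Local Open Scope ring_scope.
Local Open Scope ereal_scope.

Section GMet.
Context {R : realType} {T : Type}.

Definition is_gen_metric (d : T -> T -> \bar R) : Prop :=
  [/\ (forall x y, 0 <= d x y),
      (forall x, d x x = 0) &
      (forall x y z, d x z <= d x y + d y z)].

Definition is_left_module (d : T -> T -> \bar R) (M : T -> \bar R) : Prop :=
  (forall x, 0 <= M x) /\ (forall x y, M x <= M y + d x y).

Definition is_filter (F : set (set T)) : Prop :=
  [/\ F !=set0,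
      (forall f, F f -> f !=set0),
      (forall f g, F f -> F g -> F (f `&` g)) &
      (forall f g, F f -> f `<=` g -> F g)].

Definition Mminus (d : T -> T -> \bar R) (F : set (set T)) (x : T) : \bar R :=
  ereal_sup [set ereal_inf [set d x y | y in f] | f in F].

Definition weakly_flat (d : T -> T -> \bar R) (F : set (set T)) : Prop :=
  forall eps : R, (0 < eps)%R -> exists2 f, F f &
    forall x, f x -> forall g, F g -> exists2 y, g y & d x y <= eps%:E.

Definition filter_conv (d : T -> T -> \bar R) (F1 F2 : set (set T)) : Prop :=
  forall eps : R, (0 < eps)%R -> exists2 f, F1 f &
    forall x, f x -> forall g, F2 g -> exists2 y, g y & d x y <= eps%:E.

Definition seq_filter (y : nat -> T) : set (set T) :=
  [set f | exists n : nat, forall p : nat, (n <= p)%N -> f (y p)].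

Definition forward_cauchy (d : T -> T -> \bar R) (y : nat -> T) : Prop :=
  forall eps : R, (0 < eps)%R -> exists N : nat,
    forall n m : nat, (N <= n)%N -> (n <= m)%N -> d (y n) (y m) <= eps%:E.

End GMet.

(* Main.v *)
Require Import Defs.
From mathcomp Require Import all_boot all_order all_algebra.
From mathcomp Require Import boolp classical_sets reals constructive_ereal ereal.
From mathcomp Require Import ring lra.
Import Order.TTheory GRing.Theory Num.Theory.
Local Open Scope classical_set_scope.
Local Open Scope ereal_scope.

Lemma dense_fin {R : realType} {a z : \bar R} : a < z -> exists r : R, a < r%:E < z.
Proof.
case: a => [a||]; case: z => [z||] //=.
- rewrite lte_fin => az; exists ((a + z) / 2)%R; rewrite !lte_fin; apply/andP; split; lra.
- move=> _; exists (a + 1)%R; rewrite lte_fin ltry andbT; lra.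
- move=> _; exists (z - 1)%R; rewrite lte_fin ltNyr /=; lra.
- move=> _; exists 0%R; by rewrite ltNyr ltry.
Qed.

Lemma geo_small {R : realType} {del eps : R} : (0 < eps)%R -> (0 <= del)%R ->
  exists N : nat, (del / (2 ^ N)%:R <= eps)%R.
Proof.
move=> e0 d0.
have h : (0 <= del / eps)%R by apply: divr_ge0 => //; exact: ltW.
have := archi_boundP h; set N := Num.bound _ => hN.
exists N.
have p2 : (0 < (2 ^ N)%:R :> R)%R by rewrite ltr0n expn_gt0.
rewrite ler_pdivrMr //.
have hN2 : (N%:R <= (2 ^ N)%:R :> R)%R by rewrite ler_nat; exact/ltnW/ltn_expl.
rewrite ltr_pdivrMr // in hN.
have : (del <= N%:R * eps)%R by exact: ltW.
move=> h1; apply: (le_trans h1); rewrite mulrC; apply: ler_wpM2l; [exact: ltW|done].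
Qed.

Theorem mainTheorem13 (R : realType) (T : Type) (d : T -> T -> \bar R)
  (F : set (set T)) (M : T -> \bar R) :
  is_gen_metric d -> is_filter F -> weakly_flat d F -> is_left_module d M ->
  (exists x : T, Mminus d F x < M x) ->
  exists y : nat -> T,
    [/\ forward_cauchy d y,
        filter_conv d (seq_filter y) F &
        exists x : T, Mminus d (seq_filter y) x < M x].
Proof.
move=> [d0 dxx dtri] _ wf _ [x0 hx0].
have [b /andP[ab bM]] := dense_fin hx0.
have [c /andP[ac cb]] := dense_fin ab.
rewrite lte_fin in cb.
pose del := (b - c)%R.
have del0 : (0 < del)%R by rewrite /del; lra.
pose e (n : nat) := (del / (2 ^ n)%:R)%R.
have p2 : forall m, (0 < (2 ^ m)%:R :> R)%R by move=> m; rewrite ltr0n expn_gt0.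
have e0 : forall m, (0 < e m)%R by move=> m; apply: divr_gt0.
have ehalf : forall m, e m = (2 * e m.+1)%R.
  move=> m; rewrite /e expnS natrM.
  have := p2 m; move=> /lt0r_neq0 h; field.
  by [] .
have emono : forall n k, (e (n + k)%N <= e n)%R.
  move=> n; elim=> [|k IH]; first by rewrite addn0.
  rewrite addnS; have := ehalf (n + k)%N; have := e0 (n + k)%N.+1; lra.
have emono' : forall n m, (n <= m)%N -> (e m <= e n)%R.
  by move=> n m nm; rewrite -(subnKC nm); exact: emono.
have : forall n, exists f, F f /\ (forall x, f x -> forall g, F g ->
    exists2 y, g y & d x y <= (e n.+1)%:E).
  move=> n; have [f Ff hf] := wf _ (e0 n.+1); by exists f.
move=> /choice [fs hfs].
have : ereal_inf [set d x0 z | z in fs 0%N] < c%:E.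
  apply: le_lt_trans ac; apply: ereal_sup_ubound; exists (fs 0%N) => //.
  exact: (hfs 0%N).1.
move=> /ereal_inf_lt [v [y0 fy0 <-]] dy0.
have : forall p : nat * T, exists z, fs p.1 p.2 -> fs p.1.+1 z /\ d p.2 z <= (e p.1.+1)%:E.
  move=> [n x] /=; case: (pselect (fs n x)) => h; last by exists x.
  have [z gz dz] := (hfs n).2 x h _ (hfs n.+1).1.
  by exists z.
move=> /choice [st hst].
pose y := fix g (n : nat) : T := match n with 0%N => y0 | k.+1 => st (k, g k) end.
have hy : forall n, fs n (y n).
  by elim=> [//|n IH] /=; exact: (hst (n, y n) IH).1.
have hstep : forall n, d (y n) (y n.+1) <= (e n.+1)%:E.
  by move=> n; exact: (hst (n, y n) (hy n)).2.
have chain : forall n k, d (y n) (y (n + k)%N) <= (e n - e (n + k)%N)%:E.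
  move=> n; elim=> [|k IH]; first by rewrite addn0 dxx subrr.
  rewrite addnS; apply: (le_trans (dtri _ (y (n + k)%N) _)).
  apply: (le_trans (leeD IH (hstep (n + k)%N))).
  rewrite -EFinD lee_fin; have := ehalf (n + k)%N; lra.
have chain' : forall n m, (n <= m)%N -> d (y n) (y m) <= (e n)%:E.
  move=> n m nm; rewrite -(subnKC nm); apply: (le_trans (chain _ _)).
  rewrite lee_fin; have := e0 (n + (m - n))%N; lra.
exists y; split.
- move=> eps eps0; have [N hN] := geo_small eps0 (ltW del0).
  exists N => n m Nn nm; apply: (le_trans (chain' _ _ nm)).
  rewrite lee_fin; apply: le_trans hN; exact: emono'.
- move=> eps eps0; have [N hN] := geo_small eps0 (ltW del0).
  exists [set x | exists2 p, (N <= p)%N & x = y p].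
    by exists N => p Np; exists p.
  move=> x [p Np ->] g Fg.
  have [z gz dz] := (hfs p).2 _ (hy p) g Fg.
  exists z => //; apply: (le_trans dz); rewrite lee_fin.
  apply: le_trans hN; apply: emono'; exact: leqW.
- exists x0; apply: le_lt_trans bM.
  apply: ge_ereal_sup => _ [f [n hn] <-].
  apply: ge_ereal_inf; exists (d x0 (y n)); first by exists (y n) => //; exact: hn.
  apply: (le_trans (dtri _ y0 _)).
  have h1 : d y0 (y n) <= (e 0%N)%:E by exact: (chain' 0%N n).
  apply: (le_trans (leeD (ltW dy0) h1)).
  rewrite -EFinD lee_fin /e expn0 divr1 /del; lra.
Qed.
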